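(* The logic $\mathsf{ICK}\oplus(p\mathrel{\Box\!\!\!\rightarrow} p)\oplus(((p\mathrel{\Box\!\!\!\rightarrow} q)\wedge(q\mathrel{\Box\!\!\!\rightarrow} r))\to(p\mathrel{\Box\!\!\!\rightarrow} r))\oplus((p\to q)\to(p\mathrel{\Box\!\!\!\rightarrow} q))$ is sound and complete with respect to the conditional frames $(X,\leq,\mathcal{R})$ satisfying, for all $x\in X$ and upsets $a,b$: $R_a[x]\subseteq{\uparrow}x\cap a$, and $R_a[x]\subseteq b$ implies $R_a[x]\subseteq{\uparrow}R_b[x]$.
   Context: Formulas: $\phi ::= p\mid\bot\mid\phi\wedge\phi\mid\phi\vee\phi\mid\phi\to\phi\mid\phi\mathrel{\Box\!\!\!\rightarrow}\phi$. $\mathsf{ICK}\oplus\Gamma$ is the smallest set containing intuitionistic propositional logic, $\Gamma$, $(p\mathrel{\Box\!\!\!\rightarrow}(q\wedge r))\leftrightarrow((p\mathrel{\Box\!\!\!\rightarrow} q)\wedge(p\mathrel{\Box\!\!\!\rightarrow} r))$ and $(p\mathrel{\Box\!\!\!\rightarrow}\top)\leftrightarrow\top$, closed under uniform substitution, modus ponens and congruence rules for both arguments of $\mathrel{\Box\!\!\!\rightarrow}$. A conditional frame is $(X,\leq,\mathcal{R})$, $(X,\leq)$ a nonempty preorder, $\mathcal{R}=\{R_a\mid a\text{ an upset}\}$ with $(\leq\circ R_a)\subseteq(R_a\circ\leq)$; valuations assign upsets to letters and $x\models\phi\mathrel{\Box\!\!\!\rightarrow}\psi$ iff every $y$ with $xR_{V(\phi)}y$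 satisfies $\psi$. *)

(* Defs.v *)
Inductive form : Type :=
| Var : nat -> form
| Bot : form
| And : form -> form -> form
| Or : form -> form -> form
| Imp : form -> form -> form
| Cond : form -> form -> form.

Definition Top : form := Imp Bot Bot.
Definition Iff (a b : form) : form := And (Imp a b) (Imp b a).

Fixpoint subst (s : nat -> form) (f : form) : form :=
  match f with
  | Var n => s n
  | Bot => Bot
  | And a b => And (subst s a) (subst s b)
  | Or a b => Or (subst s a) (subst s b)
  | Imp a b => Imp (subst s a) (subst s b)
  | Cond a b => Cond (subst s a) (subst s b)
  end.

Inductive ipc_axiom : form -> Prop :=
| ax_K a b : ipc_axiom (Imp a (Imp b a))
| ax_S a b c : ipc_axiom (Imp (Imp a (Imp b c)) (Imp (Imp a b) (Imp a c)))
| ax_andE1 a b : ipc_axiom (Imp (And a b) a)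
| ax_andE2 a b : ipc_axiom (Imp (And a b) b)
| ax_andI a b : ipc_axiom (Imp a (Imp b (And a b)))
| ax_orI1 a b : ipc_axiom (Imp a (Or a b))
| ax_orI2 a b : ipc_axiom (Imp b (Or a b))
| ax_orE a b c : ipc_axiom (Imp (Imp a c) (Imp (Imp b c) (Imp (Or a b) c)))
| ax_efq a : ipc_axiom (Imp Bot a).

Definition p : form := Var 0.
Definition q : form := Var 1.
Definition r : form := Var 2.

Inductive ick_axiom : form -> Prop :=
| ick_C : ick_axiom (Iff (Cond p (And q r)) (And (Cond p q) (Cond p r)))
| ick_N : ick_axiom (Iff (Cond p Top) Top).

Inductive ICK_plus (Gamma : form -> Prop) : form -> Prop :=
| D_ipc f : ipc_axiom f -> ICK_plus Gamma f
| D_ick f : ick_axiom f -> ICK_plus Gamma f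
| D_gamma f : Gamma f -> ICK_plus Gamma f
| D_subst s f : ICK_plus Gamma f -> ICK_plus Gamma (subst s f)
| D_mp a b : ICK_plus Gamma (Imp a b) -> ICK_plus Gamma a -> ICK_plus Gamma b
| D_congL a b c : ICK_plus Gamma (Iff a b) ->
    ICK_plus Gamma (Iff (Cond a c) (Cond b c))
| D_congR a b c : ICK_plus Gamma (Iff a b) ->
    ICK_plus Gamma (Iff (Cond c a) (Cond c b)).

Inductive Gamma511 : form -> Prop :=
| g_id : Gamma511 (Cond p p)
| g_trans : Gamma511 (Imp (And (Cond p q) (Cond q r)) (Cond p r))
| g_imp : Gamma511 (Imp (Imp p q) (Cond p q)).

Definition upset {X : Type} (le : X -> X -> Prop) (a : X -> Prop) : Prop :=
  forall x y, le x y -> a x -> a y.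

(* The family R_a is given as a function of the set a
   (a predicate on X); only its values on upsets matter.  Since sets are
   extensional, R is required to depend only on the extension of a. *)
Record cframe : Type := {
  W :> Type;
  le : W -> W -> Prop;
  R : (W -> Prop) -> W -> W -> Prop;
  W_inhabited : inhabited W;
  le_refl : forall x, le x x;
  le_trans : forall x y z, le x y -> le y z -> le x z;
  R_ext : forall a b : W -> Prop, (forall x, a x <-> b x) ->
            forall x y, R a x y <-> R b x y;
  R_coh : forall a, upset le a ->
            forall x y z, le x y -> R a y z -> exists w, R a x w /\ le w z
}.

Fixpoint sat (F : cframe) (V : nat -> F -> Prop) (x : F) (f : form) : Prop :=
  match f with
  | Var n => V n x
  | Bot => False
  | And a b => sat F V x a /\ sat F V x b
  | Or a b => sat F V x a \/ sat F V x b
  | Imp a b => forall y, le F x y -> sat F V y a -> sat F V y b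
  | Cond a b => forall y, R F (fun z => sat F V z a) x y -> sat F V y b
  end.

Definition valuation (F : cframe) (V : nat -> F -> Prop) : Prop :=
  forall n, upset (le F) (V n).

Definition valid (F : cframe) (f : form) : Prop :=
  forall V, valuation F V -> forall x : F, sat F V x f.

Definition frame511 (F : cframe) : Prop :=
  (forall a, upset (le F) a -> forall x y, R F a x y -> le F x y /\ a y) /\
  (forall a b, upset (le F) a -> upset (le F) b -> forall x,
     (forall y, R F a x y -> b y) ->
     forall y, R F a x y -> exists z, R F b x z /\ le F z y).

(* Main.v *)
Require Import Defs.
From Stdlib Require Import Classical Arith Cantor Lia.

Definition thm := ICK_plus Gamma511.

Lemma persist (F : cframe) V : valuation F V ->
  forall f x y, le F x y -> sat F V x f -> sat F V y f.
Proof.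
  intros HV f; induction f; simpl; intros x y Hxy H.
  - exact (HV n x y Hxy H).
  - exact H.
  - destruct H; split; eauto.
  - destruct H; [left|right]; eauto.
  - intros z Hyz Hz. apply H; [eapply le_trans; eauto | exact Hz].
  - intros z Hz.
    destruct (R_coh F (fun z => sat F V z f1) (fun a b h => IHf1 a b h) x y z Hxy Hz)
      as [w [Hw1 Hw2]].
    eapply IHf2; [exact Hw2|]. apply H; exact Hw1.
Qed.

Lemma sat_subst (F : cframe) V s f : forall x,
  sat F V x (subst s f) <-> sat F (fun n y => sat F V y (s n)) x f.
Proof.
  induction f; simpl; intros x; try tauto.
  - rewrite IHf1, IHf2; tauto.
  - rewrite IHf1, IHf2; tauto.
  - split; intros H y Hxy Hy; apply IHf2; apply H; auto; apply IHf1; auto.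
  - split; intros H y Hy; apply IHf2; apply H; eapply R_ext; try exact Hy;
      intro z; simpl; rewrite IHf1; tauto.
Qed.

Lemma valid_iff F a b : valid F (Iff a b) ->
  forall V, valuation F V -> forall x, sat F V x a <-> sat F V x b.
Proof.
  intros H V HV x. destruct (H V HV x) as [H1 H2].
  split; intro; [apply H1|apply H2]; auto; apply le_refl.
Qed.

Lemma sound f : thm f -> forall F, frame511 F -> valid F f.
Proof.
  intro H; induction H; intros F HF V HV x.
  - destruct H; simpl.
    + intros y Hxy Hy z Hyz Hz. eapply persist; eauto.
    + intros y Hxy H1 z Hyz H2 w Hzw Hw.
      assert (Hyw : le F y w) by (eapply le_trans; eauto).
      apply (H1 w Hyw Hw w (le_refl F w)). apply H2; auto.
    + intros y _ [H1 _]; exact H1.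
    + intros y _ [_ H1]; exact H1.
    + intros y _ H1 z Hyz H2; split; [eapply persist; eauto | exact H2].
    + intros y _ H1; left; exact H1.
    + intros y _ H1; right; exact H1.
    + intros y Hxy H1 z Hyz H2 w Hzw [Hw|Hw].
      * apply H1; [eapply le_trans; eauto | exact Hw].
      * apply H2; auto.
    + intros y _ [].
  - destruct H; simpl; split.
    + intros y _ H; split; intros z Hz; apply H; auto.
    + intros y _ [H1 H2] z Hz; split; auto.
    + intros y _ _ z _ [].
    + intros y _ _ z _ w _ [].
  - destruct HF as [HF1 HF2]. destruct H; simpl.
    + intros z Hz. apply (HF1 _ (HV 0) x z Hz).
    + intros y Hxy [H1 H2] z Hz.
      destruct (HF2 _ _ (HV 0) (HV 1) y H1 z Hz) as [w [Hw1 Hw2]].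
      apply (persist F V HV r w z Hw2); simpl; apply H2; exact Hw1.
    + intros y Hxy H1 z Hz. destruct (HF1 _ (HV 0) y z Hz) as [Hyz Hz0].
      apply H1; auto.
  - apply sat_subst. apply IHICK_plus; auto.
    intros n a b Hab. apply persist; auto.
  - apply (IHICK_plus1 F HF V HV x x (le_refl F x)). apply IHICK_plus2; auto.
  - pose proof (valid_iff F a b (IHICK_plus F HF)) as E. simpl; split.
    + intros y _ H1 z Hz; apply H1; eapply R_ext; try exact Hz; intro w; simpl;
        rewrite (E V HV w); tauto.
    + intros y _ H1 z Hz; apply H1; eapply R_ext; try exact Hz; intro w; simpl;
        rewrite (E V HV w); tauto.
  - pose proof (valid_iff F a b (IHICK_plus F HF)) as E. simpl; split.
    + intros y _ H1 z Hz; apply E; auto.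
    + intros y _ H1 z Hz; apply E; auto.
Qed.

Definition s3 (a b c : form) : nat -> form :=
  fun n => match n with 0 => a | 1 => b | _ => c end.

Lemma thm_id a : thm (Cond a a).
Proof. exact (D_subst _ (s3 a a a) _ (D_gamma _ _ g_id)). Qed.

Lemma thm_trans a b c : thm (Imp (And (Cond a b) (Cond b c)) (Cond a c)).
Proof. exact (D_subst _ (s3 a b c) _ (D_gamma _ _ g_trans)). Qed.

Lemma thm_imp a b : thm (Imp (Imp a b) (Cond a b)).
Proof. exact (D_subst _ (s3 a b a) _ (D_gamma _ _ g_imp)). Qed.

Lemma thm_C2 a b c : thm (Imp (And (Cond a b) (Cond a c)) (Cond a (And b c))).
Proof.
  pose proof (D_subst _ (s3 a b c) _ (D_ick Gamma511 _ ick_C)) as H.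
  simpl in H. eapply D_mp; [apply D_ipc; apply ax_andE2 | exact H].
Qed.

Lemma thm_aa a : thm (Imp a a).
Proof.
  eapply D_mp. eapply D_mp. apply D_ipc; apply (ax_S a (Imp a a) a).
  apply D_ipc; apply ax_K. apply D_ipc; apply ax_K.
Qed.

Lemma thm_mpand x y : thm (Imp (And (Imp x y) x) y).
Proof.
  eapply D_mp. eapply D_mp. apply D_ipc; apply (ax_S (And (Imp x y) x) x y).
  apply D_ipc; apply ax_andE1. apply D_ipc; apply ax_andE2.
Qed.

Definition theory (T : form -> Prop) :=
  (forall f, thm f -> T f) /\ (forall a b, T (Imp a b) -> T a -> T b).

Definition prime (T : form -> Prop) :=
  theory T /\ ~ T Bot /\ (forall a b, T (Or a b) -> T a \/ T b).

Lemma th_mp1 T a b : theory T -> thm (Imp a b) -> T a -> T b.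
Proof. intros [H1 H2] H Ha. apply (H2 a b); auto. Qed.

Lemma th_mp2 T a b c : theory T -> thm (Imp a (Imp b c)) -> T a -> T b -> T c.
Proof. intros HT H Ha Hb. destruct HT as [H1 H2]. apply (H2 b c); auto.
  apply (H2 a); auto. Qed.

Lemma th_and T a b : theory T -> T a -> T b -> T (And a b).
Proof. intros HT; apply th_mp2; auto. apply D_ipc, ax_andI. Qed.

Lemma theory_ext T T' : theory T -> (forall f, T f <-> T' f) -> theory T'.
Proof.
  intros [H1 H2] E; split.
  - intros f Hf; apply E; auto.
  - intros a b Ha Hb; apply E; apply (H2 a b); apply E; auto.
Qed.

Definition ext (T : form -> Prop) a := fun t => T (Imp a t).

Lemma ext_theory T a : theory T -> theory (ext T a).
Proof.
  intros HT; split; unfold ext.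
  - intros f Hf. apply HT. eapply D_mp; [apply D_ipc, ax_K| exact Hf].
  - intros x y H1 H2. eapply th_mp2; [exact HT| apply D_ipc, ax_S | exact H1 | exact H2].
Qed.

Lemma ext_incl T a f : theory T -> T f -> ext T a f.
Proof. intros HT H. unfold ext. eapply th_mp1; [exact HT | apply D_ipc, ax_K | exact H]. Qed.

Lemma ext_self T a : theory T -> ext T a a.
Proof. intros HT; apply HT, thm_aa. Qed.

Definition CT (phi : form) (T : form -> Prop) := fun t => T (Cond phi t).

Lemma CT_theory phi T : theory T -> theory (CT phi T).
Proof.
  intros HT; split; unfold CT.
  - intros f Hf. apply HT. eapply D_mp; [apply thm_imp|].
    eapply D_mp; [apply D_ipc, ax_K | exact Hf].
  - intros x y H1 H2.
    assert (H3 : T (Cond phi (And (Imp x y) x))).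
    { eapply th_mp1; [exact HT | apply thm_C2 | apply th_and; auto]. }
    assert (H4 : T (Cond (And (Imp x y) x) y)).
    { apply HT. eapply D_mp; [apply thm_imp | apply thm_mpand]. }
    eapply th_mp1; [exact HT | apply thm_trans | apply th_and; eauto].
Qed.

Lemma CT_incl phi T f : theory T -> T f -> CT phi T f.
Proof.
  intros HT H. unfold CT. eapply th_mp1; [exact HT | apply thm_imp |].
  eapply th_mp1; [exact HT | apply D_ipc, ax_K | exact H].
Qed.

Lemma CT_self phi T : theory T -> CT phi T phi.
Proof. intros HT; apply HT, thm_id. Qed.

Lemma thm_theory : theory thm.
Proof. split; auto. intros a b; apply D_mp. Qed.

Fixpoint enc (f : form) : nat :=
  match f with
  | Var n => to_nat (0, n)
  | Bot => to_nat (1, 0)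
  | And a b => to_nat (2, to_nat (enc a, enc b))
  | Or a b => to_nat (3, to_nat (enc a, enc b))
  | Imp a b => to_nat (4, to_nat (enc a, enc b))
  | Cond a b => to_nat (5, to_nat (enc a, enc b))
  end.

Lemma to_nat_inj x y : to_nat x = to_nat y -> x = y.
Proof. intro H. rewrite <- (cancel_of_to x), <- (cancel_of_to y), H. reflexivity. Qed.

Lemma enc_inj f : forall g, enc f = enc g -> f = g.
Proof.
  induction f; intros g; destruct g; cbn [enc]; intro H; apply to_nat_inj in H;
    try discriminate; try reflexivity; try congruence;
  match type of H with (_, ?a) = (_, ?b) =>
    assert (E : a = b) by congruence end;
  apply to_nat_inj in E; injection E; intros; f_equal; auto.
Qed.

Section Lind.
Variable T : form -> Prop.
Variable psi : form.

Fixpoint chain (n : nat) : form -> Prop :=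
  match n with
  | 0 => T
  | S m => fun t => chain m t \/
      exists f, enc f = m /\ ~ chain m (Imp f psi) /\ chain m (Imp f t)
  end.

Lemma chain_ok : theory T -> ~ T psi -> forall n, theory (chain n) /\ ~ chain n psi.
Proof.
  intros HT Hpsi n; induction n as [|m [IH1 IH2]]; [simpl; auto|].
  destruct (classic (exists f, enc f = m /\ ~ chain m (Imp f psi))) as [[f0 [E0 N0]]|N].
  - assert (E : forall t, ext (chain m) f0 t <-> chain (S m) t).
    { intro t; simpl; split.
      - intro H; right; exists f0; auto.
      - intros [H|[f [E1 [N1 H1]]]].
        + apply ext_incl; auto.
        + assert (f = f0) by (apply enc_inj; congruence). subst; exact H1. }
    split.
    + eapply theory_ext; [apply ext_theory; exact IH1 | exact E].
    + intro H; apply E in H; exact (N0 H).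
  - assert (E : forall t, chain m t <-> chain (S m) t).
    { intro t; simpl; split; [auto|].
      intros [H|[f [E1 [N1 H1]]]]; auto. exfalso; apply N; eauto. }
    split.
    + eapply theory_ext; [exact IH1 | exact E].
    + intro H; apply E in H; auto.
Qed.

Lemma chain_mono m n t : m <= n -> chain m t -> chain n t.
Proof. induction 1; simpl; auto. Qed.

Definition Sig t := exists n, chain n t.

Lemma lind_prime : theory T -> ~ T psi ->
  prime Sig /\ (forall t, T t -> Sig t) /\ ~ Sig psi.
Proof.
  intros HT Hpsi.
  pose proof (chain_ok HT Hpsi) as C.
  assert (Th : theory Sig).
  { split.
    - intros f Hf; exists 0; simpl; apply HT; auto.
    - intros a b [i Hi] [j Hj]. exists (i + j).
      apply (proj2 (proj1 (C (i + j))) a b).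
      + apply chain_mono with i; auto; lia.
      + apply chain_mono with j; auto; lia. }
  assert (Np : ~ Sig psi) by (intros [n Hn]; exact (proj2 (C n) Hn)).
  assert (Max : forall f, ~ Sig (Imp f psi) -> Sig f).
  { intros f Nf. exists (S (enc f)). simpl. right. exists f. split; auto. split.
    - intro H; apply Nf; eexists; eauto.
    - apply (proj1 (C (enc f))), thm_aa. }
  split; [|split; [intros t Ht; exists 0; exact Ht | exact Np]].
  split; [exact Th|split].
  - intro H; apply Np. eapply th_mp1; [exact Th | apply D_ipc, ax_efq | exact H].
  - intros a b Hab. apply NNPP; intro N.
    assert (Ha : Sig (Imp a psi)) by (apply NNPP; intro N1; apply N; left; apply Max; auto).
    assert (Hb : Sig (Imp b psi)) by (apply NNPP; intro N1; apply N; right; apply Max; auto).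
    apply Np. destruct Th as [Th1 Th2].
    apply (Th2 (Or a b)); auto. apply (Th2 (Imp b psi)); auto.
    apply (Th2 (Imp a psi)); auto. apply Th1, D_ipc, ax_orE.
Qed.
End Lind.

Lemma lindenbaum T psi : theory T -> ~ T psi ->
  exists S, prime S /\ (forall t, T t -> S t) /\ ~ S psi.
Proof. intros; eexists; apply lind_prime; eauto. Qed.

Definition PW := {D : form -> Prop | prime D}.
Definition cle (x y : PW) := forall f, proj1_sig x f -> proj1_sig y f.
Definition cR (a : PW -> Prop) (x y : PW) :=
  exists T phi, theory T /\ (forall f, proj1_sig x f -> T f) /\
    (forall Th : PW, (forall f, CT phi T f -> proj1_sig Th f) -> a Th) /\
    (forall f, CT phi T f -> proj1_sig y f).

Lemma cle_refl x : cle x x. Proof. intros f H; exact H. Qed.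
Lemma cle_trans x y z : cle x y -> cle y z -> cle x z.
Proof. intros H1 H2 f H; auto. Qed.
Lemma cR_ext : forall a b : PW -> Prop, (forall x, a x <-> b x) ->
  forall x y, cR a x y <-> cR b x y.
Proof.
  intros a b E x y; split; intros [T [phi [H1 [H2 [H3 H4]]]]]; exists T, phi.
  - split; [exact H1|split; [exact H2|split; [|exact H4]]].
    intros Th HTh; apply E; auto.
  - split; [exact H1|split; [exact H2|split; [|exact H4]]].
    intros Th HTh; apply E; auto.
Qed.
Lemma cR_coh : forall a, upset cle a ->
  forall x y z, cle x y -> cR a y z -> exists w, cR a x w /\ cle w z.
Proof.
  intros a _ x y z Hxy [T [phi [H1 [H2 [H3 H4]]]]]. exists z; split; [|apply cle_refl].
  exists T, phi; split; [exact H1|split; [|split; [exact H3|exact H4]]]; auto.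
Qed.

Definition canon (H : inhabited PW) : cframe :=
  {| W := PW; le := cle; R := cR; W_inhabited := H; le_refl := cle_refl;
     le_trans := cle_trans; R_ext := cR_ext; R_coh := cR_coh |}.

Lemma canon_frame H : frame511 (canon H).
Proof.
  split.
  - intros a _ x y [T [phi [H1 [H2 [H3 H4]]]]]. split.
    + intros f Hf. apply H4, CT_incl; auto.
    + apply H3, H4.
  - intros a b _ _ x Hab y [T [phi [H1 [H2 [H3 H4]]]]]. exists y; split; [|apply cle_refl].
    exists T, phi; split; [exact H1|split; [exact H2|split; [|exact H4]]].
    intros Th HTh. apply Hab. exists T, phi; split; [exact H1|split; [exact H2|split; [exact H3|exact HTh]]].
Qed.

Definition cV (n : nat) (x : PW) := proj1_sig x (Var n).

Lemma truth H f : forall x : PW, sat (canon H) cV x f <-> proj1_sig x f.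
Proof.
  induction f; intros [x [[Hx1 Hx2] [Hx3 Hx4]]]; simpl in *.
  - unfold cV; simpl; tauto.
  - tauto.
  - rewrite IHf1, IHf2; simpl. split.
    + intros [A B]; apply th_and; [split|..]; auto.
    + intros A; split; [eapply th_mp1; [split; eauto| apply D_ipc, ax_andE1 | exact A]
                       |eapply th_mp1; [split; eauto| apply D_ipc, ax_andE2 | exact A]].
  - rewrite IHf1, IHf2; simpl. split.
    + intros [A|A]; [eapply th_mp1; [split; eauto| apply D_ipc, ax_orI1 | exact A]
                    |eapply th_mp1; [split; eauto| apply D_ipc, ax_orI2 | exact A]].
    + apply Hx4.
  - split.
    + intro Hs. apply NNPP; intro N.
      destruct (lindenbaum (ext x f1) f2) as [S [HS [HS1 HS2]]].
      { apply ext_theory; split; auto. }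
      { exact N. }
      apply HS2. apply (IHf2 (exist _ S HS)).
      apply Hs.
      * intros t Ht; apply HS1, ext_incl; [split|]; auto.
      * apply IHf1; simpl. apply HS1, ext_self; split; auto.
    + intros Hi [y Hy] Hxy Hy1. apply IHf2. apply IHf1 in Hy1. simpl in *.
      destruct (proj1 Hy) as [Hy2 Hy3]. apply (Hy3 f1); auto. apply Hxy; exact Hi.
  - split.
    + intro Hs. apply NNPP; intro N.
      assert (HT : theory x) by (split; auto).
      destruct (lindenbaum (CT f1 x) f2) as [S [HS [HS1 HS2]]].
      { apply CT_theory; auto. }
      { exact N. }
      apply HS2. apply (IHf2 (exist _ S HS)).
      apply Hs. exists x, f1; split; [exact HT|split; [auto|split; [|exact HS1]]].
      intros Th HTh. apply IHf1. apply HTh, CT_self; auto.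
    + intros Hi [y Hy] [T [phi [H1 [H2 [H3 H4]]]]].
      apply IHf2. simpl in *. apply H4. unfold CT.
      assert (A : T (Cond phi f1)).
      { apply NNPP; intro N.
        destruct (lindenbaum (CT phi T) f1) as [S [HS [HS1 HS2]]].
        { apply CT_theory; auto. }
        { exact N. }
        apply HS2. apply (IHf1 (exist _ S HS)). apply H3. exact HS1. }
      eapply th_mp1; [exact H1 | apply (thm_trans phi f1 f2) | apply th_and; auto].
Qed.

Theorem theorem5p11 : forall f : form,
  ICK_plus Gamma511 f <-> (forall F : cframe, frame511 F -> valid F f).
Proof.
  intro f; split.
  - intros Hf F HF; apply sound; auto.
  - intro Hv. apply NNPP; intro N.
    destruct (lindenbaum thm f thm_theory N) as [S [HS [HS1 HS2]]].
    pose (H := inhabits (exist prime S HS)).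
    apply HS2. apply (truth H f (exist _ S HS)).
    apply (Hv (canon H) (canon_frame H) cV).
    + intros n x y Hxy Hx. apply Hxy, Hx.
Qed.
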